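(* Let $q$ be a prime power, $1\le t\le s$, and $M$ an invertible $s\times s$ matrix over $\mathbb{F}_q$. If $\mathbf{y}=\mathbf{x}M^{-1}$ defines a linear $(t,t,s,q)$-AONT, then $\mathbf{y}=\mathbf{x}M$ defines a linear $(s-t,s-t,s,q)$-AONT.
   Context: For a bijection $\phi:\Gamma^s\to\Gamma^s$ over an alphabet $\Gamma$ of size $v$, its array representation is the $v^s\times 2s$ array having, for each $\mathbf{x}\in\Gamma^s$, a row $(\mathbf{x},\phi(\mathbf{x}))$. An $N\times k$ array is unbiased with respect to a set $D$ of columns if the rows restricted to $D$ contain every $|D|$-tuple over $\Gamma$ exactly $N/v^{|D|}$ times. For integers $0\le t_i\le t_o\le s$, $\phi$ is a $(t_i,t_o,s,v)$-AONT if its array representation (columns labelled $1,\dots,2s$) is unbiased with respect to $\{1,\dots,s\}$, $\{s+1,\dots,2s\}$, and $I\cup J$ for every $I\subseteq\{1,\dots,s\}$ with $|I|=t_i$ and every $J\subseteq\{s+1,\dots,2s\}$ with $|J|=s-t_o$. A map $\mathbf{x}\mapsto \mathbf{x}N$ on row vectors in $\mathbb{F}_q^s$ with $N$ invertible is a linear $(t_i,t_o,s,q)$-AONT if it is a $(t_i,t_o,s,q)$-AONT over $\Gamma=\mathbb{F}_q$. *)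

(* Defs.v *)
From mathcomp Require Import all_boot all_order all_algebra.
Set Implicit Arguments. Unset Strict Implicit. Unset Printing Implicit Defensive.
Import GRing.Theory.
Local Open Scope ring_scope.

(* An array with rows indexed by a finite type R and k columns over alphabet G
   (row r, column j has entry A r j) is unbiased w.r.t. a column set D if, for
   every |D|-tuple (given as the restriction to D of some g), the number of rows
   agreeing with it on D equals N / v^|D|, with N = #|R|, v = #|G|
   (stated multiplicatively: count * v^|D| = N). *)
Definition unbiased (G R : finType) (k : nat) (A : R -> 'I_k -> G)
  (D : {set 'I_k}) : Prop :=
  forall g : {ffun 'I_k -> G},
    (#|[set r | [forall j in D, A r j == g j]]| * #|G| ^ #|D| = #|R|)%N.

(* Array representation of phi : G^s -> G^s: the row for x is (x, phi x);
   columns 0..s-1 are x, columns s..2s-1 are phi x. *)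
Definition array_rep (G : finType) (s : nat) (phi : 'rV[G]_s -> 'rV[G]_s)
  (x : 'rV[G]_s) (j : 'I_(s + s)) : G :=
  match split j with
  | inl i => x ord0 i
  | inr i => phi x ord0 i
  end.

Definition AONT (G : finType) (ti tout s : nat) (phi : 'rV[G]_s -> 'rV[G]_s) : Prop :=
  [/\ (ti <= tout <= s)%N, bijective phi,
      unbiased (array_rep phi) (@lshift s s @: [set: 'I_s]),
      unbiased (array_rep phi) (@rshift s s @: [set: 'I_s]) &
      forall I J : {set 'I_s}, #|I| = ti -> #|J| = (s - tout)%N ->
        unbiased (array_rep phi) (@lshift s s @: I :|: @rshift s s @: J)].

Definition linear_AONT (F : finFieldType) (ti tout s : nat) (N : 'M[F]_s) : Prop :=
  N \in unitmx /\ AONT ti tout (fun x : 'rV[F]_s => x *m N).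
Arguments linear_AONT {F} ti tout s N.

(* Main.v *)
Require Import Defs.
From mathcomp Require Import all_boot all_order all_algebra.
From mathcomp Require Import zify.
Local Open Scope ring_scope.

Lemma forall_split s (I J : {set 'I_s}) (h : pred 'I_(s+s)) :
  [forall j in (@lshift s s @: I :|: @rshift s s @: J), h j] =
  [forall i in I, h (lshift s i)] && [forall i in J, h (rshift s i)].
Proof.
apply/forallP/andP => [H|[/forallP H1 /forallP H2]].
- split; apply/forallP => i; apply/implyP => Hi.
  + by have := H (lshift s i); rewrite in_setU (imset_f _ Hi) .
  + by have := H (rshift s i); rewrite in_setU (imset_f _ Hi) orbT.
- move=> j; apply/implyP; rewrite in_setU => /orP [/imsetP [i Hi ->]|/imsetP [i Hi ->]].
  + exact: (implyP (H1 i)).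
  + exact: (implyP (H2 i)).
Qed.

Lemma card_D s (I J : {set 'I_s}) :
  #|@lshift s s @: I :|: @rshift s s @: J| = (#|I| + #|J|)%N.
Proof.
rewrite cardsU !card_imset; [|exact: rshift_inj|exact: lshift_inj].
suff -> : @lshift s s @: I :&: @rshift s s @: J = set0 by rewrite cards0 subn0.
apply/setP => j; rewrite !inE; apply/negbTE/andP => [[/imsetP [a _ ->] /imsetP [b _ /(congr1 val) /= E]]].
have := ltn_ord a; lia.
Qed.

Lemma arl (G : finType) s (phi : 'rV[G]_s -> 'rV[G]_s) x i :
  array_rep phi x (lshift s i) = x ord0 i.
Proof. by rewrite /array_rep (unsplitK (inl _ i)). Qed.

Lemma arr (G : finType) s (phi : 'rV[G]_s -> 'rV[G]_s) x i :
  array_rep phi x (rshift s i) = phi x ord0 i.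
Proof. by rewrite /array_rep (unsplitK (inr _ i)). Qed.

Lemma swap_unbiased (G : finType) s (phi psi : 'rV[G]_s -> 'rV[G]_s)
  (K1 : cancel phi psi) (K2 : cancel psi phi) (I J : {set 'I_s}) :
  unbiased (array_rep psi) (@lshift s s @: I :|: @rshift s s @: J) ->
  unbiased (array_rep phi) (@lshift s s @: J :|: @rshift s s @: I).
Proof.
move=> H g.
pose g' : {ffun 'I_(s+s) -> G} := [ffun j => match split j with
                                 | inl i => g (rshift s i)
                                 | inr i => g (lshift s i) end].
have := H g'; rewrite !card_D addnC => <-.
congr (_ * _)%N.
rewrite -(card_preimset _ (can_inj K2)).
apply: eq_card => y; rewrite !inE !forall_split.
have E1 : forall i, g' (lshift s i) = g (rshift s i).
  by move=> i; rewrite ffunE (unsplitK (inl _ i)).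
have E2 : forall i, g' (rshift s i) = g (lshift s i).
  by move=> i; rewrite ffunE (unsplitK (inr _ i)).
rewrite andbC; congr (_ && _); apply: eq_forallb => i;
  by rewrite ?arl ?arr ?E1 ?E2 ?K2.
Qed.

Theorem mainTheorem5 (F : finFieldType) (s t : nat) (M : 'M[F]_s) :
  (1 <= t)%N -> (t <= s)%N -> M \in unitmx ->
  linear_AONT t t s (invmx M) ->
  linear_AONT (s - t) (s - t) s M.
Proof.
move=> t1 ts uM [_ [_ _ Hl Hr Hij]].
have K1 : cancel (fun x : 'rV[F]_s => x *m M) (fun x => x *m invmx M).
  by move=> x; rewrite mulmxK.
have K2 : cancel (fun x : 'rV[F]_s => x *m invmx M) (fun x => x *m M).
  by move=> x; rewrite mulmxKV.
split => //; split.
- by rewrite leqnn leq_subr.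
- exact: Bijective K1 K2.
- have := @swap_unbiased _ _ _ _ K1 K2 set0 [set: 'I_s].
  by rewrite !imset0 setU0 set0U; apply.
- have := @swap_unbiased _ _ _ _ K1 K2 [set: 'I_s] set0.
  by rewrite !imset0 setU0 set0U; apply.
- move=> I J HI HJ; apply: (@swap_unbiased _ _ _ _ K1 K2); apply: Hij => //.
  by rewrite HJ subKn.
Qed.
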